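(* Let $\Gamma$ be a $2$-arc-transitive strongly regular graph. Then either $\Gamma$ is a complete bipartite graph, or $\Gamma\cong C_5$, or $|\Gamma(u)|<|\Gamma_2(u)|$ for every vertex $u$.
   Context: A strongly regular graph with parameters $(n,k,a,c)$ is a connected $k$-regular graph on $n$ vertices in which adjacent vertices have $a$ common neighbours and distinct non-adjacent vertices have $c$ common neighbours (here of diameter $2$, i.e. non-complete). $2$-arc-transitive means $\mathrm{Aut}(\Gamma)$ is transitive on vertices, on arcs and on $2$-arcs $(v_0,v_1,v_2)$ ($v_0\sim v_1\sim v_2$, $v_0\ne v_2$). $\Gamma(u)$ is the set of neighbours of $u$ and $\Gamma_2(u)$ the set of vertices at distance $2$ from $u$. *)

(* Defs.v *)
From mathcomp Require Import all_boot fingroup perm.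
Set Implicit Arguments. Unset Strict Implicit. Unset Printing Implicit Defensive.

Definition simple_graph (T : finType) (e : rel T) : Prop :=
  symmetric e /\ irreflexive e.

Definition nbhd (T : finType) (e : rel T) (u : T) : {set T} := [set x | e u x].
Definition nbhd2 (T : finType) (e : rel T) (u : T) : {set T} :=
  [set x | [&& x != u, ~~ e u x & [exists w, e u w && e w x]]].

Definition connected_graph (T : finType) (e : rel T) : Prop :=
  forall x y : T, connect e x y.

Definition srg_params (T : finType) (e : rel T) (k a c : nat) : Prop :=
  [/\ simple_graph e /\ connected_graph e,
      (exists x y : T, (x != y) && ~~ e x y),
      (forall u : T, #|nbhd e u| = k),
      (forall u v : T, e u v -> #|nbhd e u :&: nbhd e v| = a) &
      (forall u v : T, u != v -> ~~ e u v -> #|nbhd e u :&: nbhd e v| = c)].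

Definition strongly_regular (T : finType) (e : rel T) : Prop :=
  exists k a c, srg_params e k a c.

Definition is_aut (T : finType) (e : rel T) (g : {perm T}) : Prop :=
  forall x y : T, e (g x) (g y) = e x y.

Definition vertex_transitive (T : finType) (e : rel T) : Prop :=
  forall x y : T, exists g : {perm T}, is_aut e g /\ g x = y.

Definition arc_transitive (T : finType) (e : rel T) : Prop :=
  forall x0 x1 y0 y1 : T, e x0 x1 -> e y0 y1 ->
    exists g : {perm T}, [/\ is_aut e g, g x0 = y0 & g x1 = y1].

Definition two_arc (T : finType) (e : rel T) (v0 v1 v2 : T) : Prop :=
  [/\ e v0 v1, e v1 v2 & v0 != v2].

Definition two_arc_transitive_on (T : finType) (e : rel T) : Prop :=
  forall x0 x1 x2 y0 y1 y2 : T, two_arc e x0 x1 x2 -> two_arc e y0 y1 y2 ->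
    exists g : {perm T}, [/\ is_aut e g, g x0 = y0, g x1 = y1 & g x2 = y2].

Definition two_arc_transitive (T : finType) (e : rel T) : Prop :=
  [/\ vertex_transitive e, arc_transitive e & two_arc_transitive_on e].

Definition complete_bipartite (T : finType) (e : rel T) : Prop :=
  exists A : {set T}, [/\ A != set0, ~: A != set0 &
    forall x y : T, e x y = ((x \in A) != (y \in A))].

Definition cycle_rel (n : nat) : rel 'I_n :=
  fun i j => (val j == (val i).+1 %% n) || (val i == (val j).+1 %% n).

Definition iso_C5 (T : finType) (e : rel T) : Prop :=
  exists f : T -> 'I_5, bijective f /\
    forall x y : T, e x y = @cycle_rel 5 (f x) (f y).

(* Main.v *)
Require Import Defs.
From mathcomp Require Import all_boot fingroup perm zify.
Set Implicit Arguments. Unset Strict Implicit. Unset Printing Implicit Defensive.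

Lemma path_2arc (T : finType) (e : rel T) n : forall (p : seq T) x, size p <= n ->
  path e x p -> x != last x p -> ~~ e x (last x p) ->
  exists v1 v2, [/\ e x v1, e v1 v2, x != v2 & ~~ e x v2].
Proof.
elim: n => [|n IH] [|y [|z q]] x //=; try by rewrite eqxx.
- by rewrite andbT => _ ->.
- rewrite ltnS => Hs /and3P [Hxy Hyz Hq] Hne Hnadj.
  case: (boolP ((x != z) && ~~ e x z)) => [/andP [H1 H2]|].
    by exists y, z.
  rewrite negb_and !negbK => /orP [/eqP Exz|Exz].
    subst z. apply: (IH q x) => //. by apply: leq_trans (leqnSn _) Hs.
  by apply: (IH (z :: q) x) => //=; rewrite Exz.
Qed.

Lemma card_setI_sum (T : finType) (A B : {set T}) :
  #|A :&: B| = \sum_(x in A) (x \in B).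
Proof.
rewrite -sum1_card (eq_bigl (fun x => (x \in A) && (x \in B))); last by move=> x; rewrite inE.
rewrite big_mkcondr /=. apply: eq_bigr => x _. by case: (x \in B).
Qed.

Lemma card2_other (T : finType) (A : {set T}) a : #|A| = 2 -> a \in A ->
  exists b, b \in A /\ a != b.
Proof.
move=> H Ha. have : 0 < #|A :\ a|.
  by move: (cardsD1 a A); rewrite H Ha; lia.
case/card_gt0P => b; rewrite !inE => /andP [Hb1 Hb2]. exists b; split => //.
by rewrite eq_sym.
Qed.

Lemma card2_eq (T : finType) (A : {set T}) a b : #|A| = 2 -> a \in A -> b \in A ->
  a != b -> A = [set a; b].
Proof.
move=> H Ha Hb Hab. apply/eqP; rewrite eq_sym eqEcard cards2 H Hab andbT.
by apply/subsetP => z; rewrite !inE => /orP [/eqP->|/eqP->].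
Qed.

Theorem lemma4p2 (T : finType) (e : rel T) :
  strongly_regular e -> two_arc_transitive e ->
  complete_bipartite e \/ iso_C5 e \/
  (forall u : T, #|nbhd e u| < #|nbhd2 e u|).
Proof.
move=> [k [a [c [[[sym irr] conn] [x0 [y0 /andP [nxy nexy]]] Hk Ha Hc]]]] [_ _ H2].
have [v1 [v2 [e01 e12 n02 ne02]]] :
    exists v1 v2, [/\ e x0 v1, e v1 v2, x0 != v2 & ~~ e x0 v2].
  have /connectP [p Hp Hl] := conn x0 y0.
  by apply: (@path_2arc _ _ (size p) p) => //; rewrite -Hl.
have tf : forall a b d, e a b -> e b d -> a != d -> ~~ e a d.
  move=> a' b d Hab Hbd Had.
  have [g [Hg g0 g1 g2]] := H2 x0 v1 v2 a' b d (And3 e01 e12 n02) (And3 Hab Hbd Had).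
  by rewrite -g0 -g2 Hg.
have eN : forall a b, e a b -> a != b.
  by move=> a' b H; apply/eqP => E; rewrite E irr in H.
have k1 : 1 <= k.
  rewrite -(Hk x0); apply/card_gt0P; exists v1; by rewrite inE.
have c1 : 1 <= c.
  rewrite -(Hc x0 v2 n02 ne02); apply/card_gt0P; exists v1; by rewrite !inE e01 sym.
have ck : c <= k.
  by rewrite -(Hc x0 v2 n02 ne02) -(Hk x0); apply: subset_leq_card; apply: subsetIl.
have count : forall u, c * #|nbhd2 e u| = k * k.-1.
  move=> u.
  have E1 : \sum_(w in nbhd2 e u) #|nbhd e u :&: nbhd e w| = c * #|nbhd2 e u|.
    rewrite (eq_bigr (fun _ => c)); first by rewrite sum_nat_const mulnC.
    move=> w; rewrite inE => /and3P [Hwu Hnw _]; apply: Hc => //; by rewrite eq_sym.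
  rewrite -E1 (eq_bigr (fun w => \sum_(x in nbhd e u) (x \in nbhd e w)));
    last by move=> w _; rewrite card_setI_sum.
  rewrite exchange_big /=.
  rewrite (eq_bigr (fun _ => k.-1)); first by rewrite sum_nat_const Hk.
  move=> x; rewrite inE => Hux.

  rewrite (eq_bigr (fun w => nat_of_bool (w \in nbhd e x))); last by move=> w _; rewrite !inE sym.
  rewrite -card_setI_sum.
  have -> : nbhd2 e u :&: nbhd e x = nbhd e x :\ u.
    apply/setP => w; rewrite !inE.
    case: (boolP (w == u)) => [/eqP->|Hwu] //=.
    case Hxw: (e x w); rewrite ?andbF ?andbT //.
    apply/andP; split; first by apply: (tf u x w) => //; rewrite eq_sym.
    by apply/existsP; exists x; rewrite Hux Hxw.
  move: (cardsD1 u (nbhd e x)); rewrite Hk inE (sym x u) Hux /=; lia.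
have [cEk|[cEk|cLk]] : c = k \/ c = k.-1 \/ c.+2 <= k by lia.
-
  left.
  have NN : forall w, x0 != w -> ~~ e x0 w -> nbhd e w = nbhd e x0.
    move=> w H1 H3.
    have HI := Hc x0 w H1 H3.
    have E1 : nbhd e x0 :&: nbhd e w = nbhd e x0.
      apply/eqP; rewrite eqEcard subsetIl HI cEk Hk leqnn //.
    have E2 : nbhd e x0 :&: nbhd e w = nbhd e w.
      apply/eqP; rewrite eqEcard subsetIr HI cEk Hk leqnn //.
    by rewrite -E2 E1.
  exists [set x | ~~ e x0 x]; split.
  + apply/set0Pn; exists x0; by rewrite inE irr.
  + apply/set0Pn; exists v1; by rewrite !inE e01.
  + move=> x y; rewrite !inE.
    have key : forall x y, e x0 x -> ~~ e x0 y -> e x y.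
      move=> x' y' H1 H3.
      case: (boolP (x0 == y')) => [/eqP <-|Hne]; first by rewrite sym.
      have := NN y' Hne H3. move/setP => /(_ x'); rewrite !inE H1 sym => -> //.
    case Hx: (e x0 x); case Hy: (e x0 y) => /=.
    * case: (boolP (x == y)) => [/eqP->|Hxy]; first by rewrite irr.
      by apply/negbTE; apply: (tf x x0 y) => //; rewrite sym.
    * by apply: key => //; rewrite Hy.
    * by rewrite sym; apply: key => //; rewrite Hx.
    * apply/negbTE/negP => Hxy.
      case: (boolP (x0 == x)) => [/eqP Ex|Hne].
        by subst x; rewrite Hxy in Hy.
      have := NN x Hne (negbT Hx). move/setP => /(_ y); rewrite !inE Hxy Hy //.
-
  right; left.
  have HI := Hc x0 v2 n02 ne02.
  have [w' Hw'] : exists w', w' \in nbhd e v2 :\: nbhd e x0.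
    apply/set0Pn; rewrite -card_gt0.
    move: (cardsID (nbhd e x0) (nbhd e v2)); rewrite Hk setIC HI; lia.
  move: Hw'; rewrite !inE => /andP [nw' ew'].
  have n0w : x0 != w'.
    by apply/eqP => E; subst w'; rewrite sym ew' in ne02.
  have HI' := Hc x0 w' n0w nw'.
  have k2 : k = 2.
    have Hdis : (nbhd e x0 :&: nbhd e v2) :&: (nbhd e x0 :&: nbhd e w') = set0.
      apply/setP => z; rewrite !inE.
      case Hz1: (e v2 z); case Hz2: (e w' z); rewrite ?andbF //=.
      have := tf z v2 w'; rewrite sym Hz1 ew' (sym z w') Hz2 /= => H.
      have : z != w' by apply: eN; rewrite sym.
      by move/(H isT isT).
    have : #|(nbhd e x0 :&: nbhd e v2) :|: (nbhd e x0 :&: nbhd e w')| <= k.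
      by rewrite -(Hk x0); apply: subset_leq_card; rewrite subUset !subsetIl.
    rewrite cardsU Hdis cards0 HI HI'. lia.
  have c_1 : c = 1 by lia.
  rewrite k2 in Hk. rewrite c_1 in Hc.
  have eE : forall a b, e a b = (b \in nbhd e a) by move=> a' b; rewrite inE.
  have [x2 [Hx2 n12]] : exists b, b \in nbhd e x0 /\ v1 != b.
    by apply: card2_other (Hk x0) _; rewrite inE.
  have [w1 [Hw1 n0w1]] : exists b, b \in nbhd e v1 /\ x0 != b.
    by apply: card2_other (Hk v1) _; rewrite inE sym.
  rewrite inE in Hx2.
  have [y [Hy n0y]] : exists b, b \in nbhd e x2 /\ x0 != b.
    by apply: card2_other (Hk x2) _; rewrite inE sym.
  rewrite inE in Hw1. rewrite inE in Hy.
  have Nu : nbhd e x0 = [set v1; x2] by apply: card2_eq; rewrite ?inE.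
  have Nx1 : nbhd e v1 = [set x0; w1].
    by apply: card2_eq => //; rewrite inE // sym.
  have Nx2 : nbhd e x2 = [set x0; y].
    by apply: card2_eq => //; rewrite inE // sym.
  have ne12 : ~~ e v1 x2.
    by apply: (tf v1 x0 x2) => //; rewrite sym.
  have ne0w1 := tf x0 v1 w1 e01 Hw1 n0w1.
  have ne0y := tf x0 x2 y Hx2 Hy n0y.
  have nw1x2 : w1 != x2.
    by apply/eqP => E; rewrite E in Hw1; rewrite Hw1 in ne12.
  have nw1y : w1 != y.
    apply/eqP => E; rewrite -E in Hy.
    have HI3 := Hc x0 w1 n0w1 ne0w1.
    have : [set v1; x2] \subset nbhd e x0 :&: nbhd e w1.
      apply/subsetP => z; rewrite !inE => /orP[/eqP->|/eqP->];
        rewrite ?e01 ?Hx2 /= sym ?Hw1 ?Hy //.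
    move/subset_leq_card; rewrite cards2 n12 HI3 //.
  have nx2w1 : ~~ e x2 w1.
    by rewrite eE Nx2 !inE (eq_sym w1 x0) negb_or n0w1 nw1y.
  have ew1y : e w1 y.
    have HI3 := Hc x2 w1 (_ : x2 != w1) nx2w1.
    have [v Hv] : exists v, v \in nbhd e x2 :&: nbhd e w1.
      by apply/set0Pn; rewrite -card_gt0 HI3 // eq_sym.
    move: Hv; rewrite inE Nx2 !inE => /andP [/orP [/eqP->|/eqP->] Hv] //.
    by rewrite sym Hv in ne0w1.
  have n1y : v1 != y.
    by apply/eqP => E; rewrite -E sym in Hy; rewrite Hy in ne12.
  have ne1y : ~~ e v1 y.
    by rewrite eE Nx1 !inE (eq_sym y x0) (eq_sym y w1) negb_or n0y nw1y.
  pose s := [:: x0; v1; w1; y; x2].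
  have every : forall t, t \in s.
    move=> t; rewrite !inE.
    case: (boolP (t == x0)) => //= Ht.
    case Het: (e x0 t).
      by move: Het; rewrite eE Nu !inE => /orP[->|->]; rewrite ?orbT.
    have HI3 := Hc x0 t (_ : x0 != t) (negbT Het).
    have [v Hv] : exists v, v \in nbhd e x0 :&: nbhd e t.
      by apply/set0Pn; rewrite -card_gt0 HI3 // eq_sym.
    move: Hv; rewrite inE Nu !inE => /andP [/orP[/eqP->|/eqP->] Hv].
      by move: Hv; rewrite sym eE Nx1 !inE (negbTE Ht) /= => ->; rewrite orbT.
    by move: Hv; rewrite sym eE Nx2 !inE (negbTE Ht) /= => ->; rewrite !orbT.
  have Us : uniq s.
    have n01 := eN _ _ e01. have n0x2 := eN _ _ Hx2. have n1w1 := eN _ _ Hw1.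
    have nyx2 : y != x2 by rewrite eq_sym; apply: eN.
    have nw1y' := eN _ _ ew1y.
    rewrite /= !inE !negb_or n01 n0w1 n0y n0x2 n1w1 n1y n12 nw1y nw1x2 nyx2 //.
  pose f := fun t => (inord (index t s) : 'I_5).
  pose g := fun i : 'I_5 => nth x0 s i.
  have fK : cancel f g.
    by move=> t; rewrite /g /f inordK ?nth_index ?index_mem.
  exists f; split.
    exists g => // i. by rewrite /f /g index_uniq // inord_val.
  have Hij : forall i j : 'I_5, e (g i) (g j) = cycle_rel i j.
    have e10 : e v1 x0 by rewrite sym.
    have ew11 : e w1 v1 by rewrite sym.
    have eyw1 : e y w1 by rewrite sym.
    have ex2y' : e y x2 by rewrite sym.
    have ex20 : e x2 x0 by rewrite sym.
    have f1 := negbTE ne0w1. have f2 := negbTE ne0y. have f3 := negbTE ne1y.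
    have f4 := negbTE ne12. have f5 := negbTE nx2w1.
    have f1' : e w1 x0 = false by rewrite sym.
    have f2' : e y x0 = false by rewrite sym.
    have f3' : e y v1 = false by rewrite sym.
    have f4' : e x2 v1 = false by rewrite sym.
    have f5' : e w1 x2 = false by rewrite sym.
    move=> [[|[|[|[|[|i]]]]] Hi] [[|[|[|[|[|j]]]]] Hj] //;
      rewrite /g /cycle_rel /= ?irr ?e01 ?Hw1 ?ew1y ?Hy ?Hx2 ?e10 ?ew11 ?eyw1 ?ex2y' ?ex20
        ?f1 ?f2 ?f3 ?f4 ?f5 ?f1' ?f2' ?f3' ?f4' ?f5' //.
  by move=> t t'; have := Hij (f t) (f t'); rewrite !fK.
- right; right => u.
  have := count u. rewrite Hk. nia.
Qed.
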